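(* For any natural number $n \geq 1$, $\{\omega \cdot 2, \omega^\star \cdot 2\} \leq_c \{\omega^2 \cdot n, (\omega^2)^\star \cdot n\}$.
   Context: Structures have domains contained in $\omega$. For countable structures $\mathcal{A},\mathcal{B}$, the class $\{\mathcal{A},\mathcal{B}\}$ denotes the class of all structures (with domain $\subseteq\omega$) isomorphic to $\mathcal{A}$ or to $\mathcal{B}$. Linear orders are in the language $\{<\}$; $L^\star$ is the reverse of a linear order $L$; $\omega\cdot 2$, $\omega^2\cdot n$ are ordinal order types. An enumeration operator $\Gamma$ is a c.e. set of pairs $(\alpha,\varphi)$ with $\alpha$ a finite set of basic (atomic or negated atomic) sentences of the input language with constants from $\omega$ and $\varphi$ a basic sentence of the output language with constants from $\omega$; $\Gamma(X)=\{\varphi : (\alpha,\varphi)\in\Gamma,\ \alpha\subseteq X\}$. $\Gamma$ is a computable embedding of $\mathcal{K}_0$ into $\mathcal{K}_1$ ($\mathcal{K}_0\leq_c\mathcal{K}_1$) if for every $\mathcal{A}\in\mathcal{K}_0$, $\Gamma$ applied to the atomic diagram of $\mathcal{A}$ is the atomic diagram of a structure $\Gamma(\mathcal{A})\in\mathcal{K}_1$, and for all $\mathcal{A},\mathcal{B}\in\mathcal{K}_0$, $\mathcal{A}\cong\mathcal{B}$ iff $\Gamma(\mathcal{A})\cong\Gamma(\mathcal{B})$. *)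

(* Defs.v *)
From Stdlib Require Import Arith List Cantor.
Import ListNotations.

(* Arguments are lists of naturals (missing arguments default to 0).   *)
Inductive prf : Type :=
| PZero : prf
| PSucc : prf
| PProj : nat -> prf
| PComp : prf -> list prf -> prf
| PPrec : prf -> prf -> prf
| PMu   : prf -> prf.

Inductive eval : prf -> list nat -> nat -> Prop :=
| ev_zero : forall args, eval PZero args 0
| ev_succ : forall args, eval PSucc args (S (nth 0 args 0))
| ev_proj : forall i args, eval (PProj i) args (nth i args 0)
| ev_comp : forall f gs args ys y,
    evals gs args ys -> eval f ys y -> eval (PComp f gs) args y
| ev_prec0 : forall f g rest y,
    eval f rest y -> eval (PPrec f g) (0 :: rest) y
| ev_precS : forall f g n rest r y,
    eval (PPrec f g) (n :: rest) r -> eval g (n :: r :: rest) y ->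
    eval (PPrec f g) (S n :: rest) y
| ev_prec_nil : forall f g y,
    eval (PPrec f g) [0] y -> eval (PPrec f g) [] y
| ev_mu : forall f args n,
    eval f (n :: args) 0 ->
    (forall m, m < n -> exists k, eval f (m :: args) (S k)) ->
    eval (PMu f) args n
with evals : list prf -> list nat -> list nat -> Prop :=
| evs_nil : forall args, evals [] args []
| evs_cons : forall g gs args y ys,
    eval g args y -> evals gs args ys -> evals (g :: gs) args (y :: ys).

Definition ce (S : nat -> Prop) : Prop :=
  exists e : prf, forall x, S x <-> exists y, eval e [x] y.

Record structure : Type := Struct {
  sdom : nat -> Prop;
  srel : nat -> nat -> Prop }.

(* atomic sentences with constants from omega, and basic sentences
   (true = the atom itself, false = its negation) *)
Inductive atom : Type := AEq (x y : nat) | ALt (x y : nat).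
Definition basic : Type := (bool * atom)%type.

Definition atom_holds (A : structure) (a : atom) : Prop :=
  match a with
  | AEq x y => x = y
  | ALt x y => srel A x y
  end.

Definition atom_consts_in (A : structure) (a : atom) : Prop :=
  match a with
  | AEq x y | ALt x y => sdom A x /\ sdom A y
  end.

Definition diag (A : structure) (phi : basic) : Prop :=
  atom_consts_in A (snd phi) /\
  (if fst phi then atom_holds A (snd phi) else ~ atom_holds A (snd phi)).

Definition iso (A B : structure) : Prop :=
  exists f g : nat -> nat,
    (forall x, sdom A x -> sdom B (f x) /\ g (f x) = x) /\
    (forall y, sdom B y -> sdom A (g y) /\ f (g y) = y) /\
    (forall x y, sdom A x -> sdom A y -> (srel A x y <-> srel B (f x) (f y))).

Definition class2 (A B : structure) (C : structure) : Prop := iso C A \/ iso C B.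

Definition code_atom (a : atom) : nat :=
  match a with
  | AEq x y => to_nat (0, to_nat (x, y))
  | ALt x y => to_nat (1, to_nat (x, y))
  end.
Definition code_basic (phi : basic) : nat :=
  to_nat ((if fst phi then 1 else 0), code_atom (snd phi)).
Fixpoint code_list (l : list basic) : nat :=
  match l with
  | [] => 0
  | phi :: l' => S (to_nat (code_basic phi, code_list l'))
  end.

(* An enumeration operator: a set Gamma of pairs (alpha, phi), alpha a
   finite set (given as a list) of basic sentences and phi a basic
   sentence, whose set of codes is c.e. *)
Definition enum_operator (Gamma : list basic -> basic -> Prop) : Prop :=
  ce (fun c => exists alpha phi,
         c = to_nat (code_list alpha, code_basic phi) /\ Gamma alpha phi).

Definition apply_op (Gamma : list basic -> basic -> Prop) (X : basic -> Prop)
  (phi : basic) : Prop :=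
  exists alpha, Gamma alpha phi /\ (forall psi, In psi alpha -> X psi).

Definition comp_embeddable (K0 K1 : structure -> Prop) : Prop :=
  exists Gamma,
    enum_operator Gamma /\
    (forall A, K0 A ->
       exists B, K1 B /\ forall phi, diag B phi <-> apply_op Gamma (diag A) phi) /\
    (forall A A' B B', K0 A -> K0 A' ->
       (forall phi, diag B phi <-> apply_op Gamma (diag A) phi) ->
       (forall phi, diag B' phi <-> apply_op Gamma (diag A') phi) ->
       (iso A A' <-> iso B B')).

Definition full_dom : nat -> Prop := fun _ => True.

Definition ord_omega : nat -> nat -> Prop := lt.
(* omega^2: pairs (a, b) (via Cantor decoding), lexicographic *)
Definition ord_omega2 (x y : nat) : Prop :=
  fst (of_nat x) < fst (of_nat y) \/
  (fst (of_nat x) = fst (of_nat y) /\ snd (of_nat x) < snd (of_nat y)).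
Definition ord_rev (L : nat -> nat -> Prop) (x y : nat) : Prop := L y x.
(* L . k : k copies of L in order; x lies in copy (x mod k) at place x / k *)
Definition ord_times (L : nat -> nat -> Prop) (k : nat) (x y : nat) : Prop :=
  x mod k < y mod k \/ (x mod k = y mod k /\ L (x / k) (y / k)).

Definition omega_times_2 : structure := Struct full_dom (ord_times ord_omega 2).
Definition omega_star_times_2 : structure :=
  Struct full_dom (ord_times (ord_rev ord_omega) 2).
Definition omega2_times (n : nat) : structure :=
  Struct full_dom (ord_times ord_omega2 n).
Definition omega2_star_times (n : nat) : structure :=
  Struct full_dom (ord_times (ord_rev ord_omega2) n).

(* Main.v *)
Require Import Defs.
From Stdlib Require Import Arith List Cantor Lia Bool Classical ClassicalEpsilon FinFun.
Import ListNotations.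


Notation exactL p G := (forall args y, eval p args y <-> y = G args).

Lemma inv_comp f gs args y : eval (PComp f gs) args y ->
  exists ys, evals gs args ys /\ eval f ys y.
Proof. intro H; inversion H; subst; eauto. Qed.

Lemma inv_evals_nil args ys : evals [] args ys -> ys = [].
Proof. intro H; inversion H; auto. Qed.

Lemma inv_evals_cons g gs args ys : evals (g :: gs) args ys ->
  exists y ys', ys = y :: ys' /\ eval g args y /\ evals gs args ys'.
Proof. intro H; inversion H; subst; eauto. Qed.

Lemma ex_zero : exactL PZero (fun _ => 0).
Proof. intros args y; split; [intro H; inversion H; auto | intros ->; constructor]. Qed.

Lemma ex_succ : exactL PSucc (fun args => S (nth 0 args 0)).
Proof. intros args y; split; [intro H; inversion H; auto | intros ->; constructor]. Qed.

Lemma ex_proj i : exactL (PProj i) (fun args => nth i args 0).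
Proof. intros args y; split; [intro H; inversion H; auto | intros ->; constructor]. Qed.

Lemma ex_comp1 f F g G :
  (forall a y, eval f [a] y <-> y = F a) -> exactL g G ->
  exactL (PComp f [g]) (fun args => F (G args)).
Proof.
  intros Hf Hg args y; split.
  - intro H. apply inv_comp in H as (ys & H1 & H2).
    apply inv_evals_cons in H1 as (y1 & ys' & -> & H3 & H4).
    apply inv_evals_nil in H4; subst.
    apply Hg in H3; subst. apply Hf in H2; auto.
  - intros ->. econstructor.
    + constructor; [apply Hg; reflexivity| constructor].
    + apply Hf; reflexivity.
Qed.

Lemma ex_comp2 f F g1 G1 g2 G2 :
  (forall a b y, eval f [a; b] y <-> y = F a b) -> exactL g1 G1 -> exactL g2 G2 ->
  exactL (PComp f [g1; g2]) (fun args => F (G1 args) (G2 args)).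
Proof.
  intros Hf Hg1 Hg2 args y; split.
  - intro H. apply inv_comp in H as (ys & H1 & H2).
    apply inv_evals_cons in H1 as (y1 & ys' & -> & H3 & H4).
    apply inv_evals_cons in H4 as (y2 & ys'' & -> & H5 & H6).
    apply inv_evals_nil in H6; subst.
    apply Hg1 in H3; apply Hg2 in H5; subst. apply Hf in H2; auto.
  - intros ->. econstructor.
    + constructor; [apply Hg1; reflexivity|].
      constructor; [apply Hg2; reflexivity| constructor].
    + apply Hf; reflexivity.
Qed.

Fixpoint recf (F : list nat -> nat) (G : nat -> nat -> list nat -> nat) n rest :=
  match n with 0 => F rest | S m => G m (recf F G m rest) rest end.

Lemma ex_prec f g F G : exactL f F ->
  (forall m r rest y, eval g (m :: r :: rest) y <-> y = G m r rest) ->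
  forall m rest y, eval (PPrec f g) (m :: rest) y <-> y = recf F G m rest.
Proof.
  intros Hf Hg m. induction m as [|m IH]; intros rest y; split.
  - intro H; inversion H; subst. apply Hf; auto.
  - intros ->. constructor. apply Hf; reflexivity.
  - intro H; inversion H as [| | | |? ? ? ? ? H1|? ? ? ? r' ? H1 H2| |]; subst. simpl.
    apply IH in H1. subst. apply Hg in H2. auto.
  - intros ->. simpl. econstructor; [apply IH; reflexivity| apply Hg; reflexivity].
Qed.

Definition ppred := PPrec PZero (PProj 0).
Lemma ex_pred : forall a y, eval ppred [a] y <-> y = Nat.pred a.
Proof.
  intros a y. unfold ppred. rewrite (ex_prec _ _ (fun _ => 0) (fun m r rest => m) ex_zero).
  - destruct a; reflexivity.
  - intros m r rest y'. rewrite ex_proj. reflexivity.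
Qed.

Definition psubr := PPrec (PProj 0) (PComp ppred [PProj 1]).
Lemma ex_subr : forall m a y, eval psubr [m; a] y <-> y = a - m.
Proof.
  intros m a y. unfold psubr. rewrite (ex_prec _ _ (fun args => nth 0 args 0) (fun m r rest => Nat.pred r) (ex_proj 0)).
  - replace (recf (fun args => nth 0 args 0) (fun _ r _ => Nat.pred r) m [a]) with (a - m); [reflexivity|].
    induction m; simpl; [lia|]. rewrite <- IHm. lia.
  - intros m' r rest y'. rewrite (ex_comp1 _ _ _ _ ex_pred (ex_proj 1)). reflexivity.
Qed.

Lemma ex_op2_from (p : prf) (F : nat -> nat -> nat) :
  exactL p (fun args => F (nth 0 args 0) (nth 1 args 0)) ->
  forall a b y, eval p [a; b] y <-> y = F a b.
Proof. intros H a b y. rewrite H. reflexivity. Qed.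

Lemma ex_op1_from (p : prf) (F : nat -> nat) :
  exactL p (fun args => F (nth 0 args 0)) ->
  forall a y, eval p [a] y <-> y = F a.
Proof. intros H a y. rewrite H. reflexivity. Qed.

Definition psub := PComp psubr [PProj 1; PProj 0].
Lemma ex_sub : forall a b y, eval psub [a; b] y <-> y = a - b.
Proof.
  apply ex_op2_from. apply (ex_comp2 _ (fun m a => a - m)); [apply ex_subr| apply ex_proj| apply ex_proj].
Qed.

Definition padd := PPrec (PProj 0) (PComp PSucc [PProj 1]).
Lemma ex_add : forall a b y, eval padd [a; b] y <-> y = a + b.
Proof.
  intros m a y. unfold padd. rewrite (ex_prec _ _ (fun args => nth 0 args 0) (fun m r rest => S r) (ex_proj 0)).
  - replace (recf (fun args => nth 0 args 0) (fun _ r _ => S r) m [a]) with (m + a); [reflexivity|].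
    induction m; simpl; lia.
  - intros m' r rest y'. rewrite (ex_comp1 _ (fun a => S a) _ (fun args => nth 1 args 0)). reflexivity.
    + intros a' y''. rewrite ex_succ. reflexivity.
    + apply ex_proj.
Qed.

Definition T (m : nat) : nat := nat_rec (fun _ => nat) 0 (fun i m => S i + m) m.
Lemma T_S m : T (S m) = S m + T m. Proof. reflexivity. Qed.
Lemma T_0 : T 0 = 0. Proof. reflexivity. Qed.
Lemma to_nat_T x y : to_nat (x, y) = y + T (y + x). Proof. reflexivity. Qed.

Definition ptri := PPrec PZero (PComp padd [PComp PSucc [PProj 0]; PProj 1]).
Lemma ex_tri : forall a y, eval ptri [a] y <-> y = T a.
Proof.
  intros m y. unfold ptri. rewrite (ex_prec _ _ (fun _ => 0) (fun m r rest => S m + r) ex_zero).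
  - assert (E: forall k, recf (fun _ => 0) (fun m r (_:list nat) => S m + r) k [] = T k)
      by (induction k; [reflexivity| cbn [recf]; rewrite IHk; reflexivity]).
    split; intro H; rewrite H; [apply E | symmetry; apply E].
  - intros m' r rest y'. rewrite (ex_comp2 _ Nat.add _ (fun args => S (nth 0 args 0)) _ (fun args => nth 1 args 0)).
    reflexivity. apply ex_add.
    apply (ex_comp1 _ S); [intros; apply ex_succ| apply ex_proj].
    apply ex_proj.
Qed.

Fixpoint pconst (k : nat) : prf := match k with 0 => PZero | S k => PComp PSucc [pconst k] end.
Lemma ex_const k : exactL (pconst k) (fun _ => k).
Proof.
  induction k; simpl.
  - apply ex_zero.
  - apply (ex_comp1 _ S _ (fun _ => k)); [intros; apply ex_succ| exact IHk].
Qed.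

Fixpoint wfun (c : nat) : nat :=
  match c with 0 => 0 | S c' => wfun c' + (1 - (T (S (wfun c')) - S c')) end.

Definition gW := PComp padd [PProj 1; PComp psub [pconst 1;
   PComp psub [PComp ptri [PComp PSucc [PProj 1]]; PComp PSucc [PProj 0]]]].
Definition pw := PPrec PZero gW.

Lemma ex_gW : forall m r rest y, eval gW (m :: r :: rest) y <-> y = r + (1 - (T (S r) - S m)).
Proof.
  intros m r rest y. unfold gW.
  rewrite (ex_comp2 _ Nat.add _ (fun args => nth 1 args 0) _
     (fun args => 1 - (T (S (nth 1 args 0)) - S (nth 0 args 0)))); [reflexivity| apply ex_add | apply ex_proj |].
  apply (ex_comp2 _ Nat.sub _ (fun _ => 1) _ (fun args => T (S (nth 1 args 0)) - S (nth 0 args 0))); [apply ex_sub| apply ex_const|].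
  apply (ex_comp2 _ Nat.sub _ (fun args => T (S (nth 1 args 0))) _ (fun args => S (nth 0 args 0))); [apply ex_sub| |].
  - apply (ex_comp1 _ T _ (fun args => S (nth 1 args 0))); [apply ex_tri|].
    apply (ex_comp1 _ S _ (fun args => nth 1 args 0)); [intros; apply ex_succ| apply ex_proj].
  - apply (ex_comp1 _ S _ (fun args => nth 0 args 0)); [intros; apply ex_succ| apply ex_proj].
Qed.

Lemma ex_w : forall a y, eval pw [a] y <-> y = wfun a.
Proof.
  intros m y. unfold pw. rewrite (ex_prec _ _ (fun _ => 0) (fun m r rest => r + (1 - (T (S r) - S m))) ex_zero ex_gW).
  assert (E: forall k, recf (fun _ => 0) (fun m r (_:list nat) => r + (1 - (T (S r) - S m))) k [] = wfun k)
      by (induction k; [reflexivity| cbn [recf wfun]; rewrite IHk; reflexivity]).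
  split; intro H; rewrite H; [apply E | symmetry; apply E].
Qed.

Inductive expr : Type :=
| EV (k : nat) | EC (k : nat) | EAdd (a b : expr) | ESub (a b : expr) | ETri (a : expr) | EW (a : expr).

Fixpoint denote (e : expr) (args : list nat) : nat :=
  match e with
  | EV k => nth k args 0
  | EC k => k
  | EAdd a b => denote a args + denote b args
  | ESub a b => denote a args - denote b args
  | ETri a => T (denote a args)
  | EW a => wfun (denote a args)
  end.

Fixpoint compile (e : expr) : prf :=
  match e with
  | EV k => PProj k
  | EC k => pconst k
  | EAdd a b => PComp padd [compile a; compile b]
  | ESub a b => PComp psub [compile a; compile b]
  | ETri a => PComp ptri [compile a]
  | EW a => PComp pw [compile a]
  end.

Lemma compile_exact e : exactL (compile e) (denote e).
Proof.
  induction e; simpl.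
  - apply ex_proj.
  - apply ex_const.
  - apply (ex_comp2 _ Nat.add _ (denote e1) _ (denote e2)); auto. apply ex_add.
  - apply (ex_comp2 _ Nat.sub _ (denote e1) _ (denote e2)); auto. apply ex_sub.
  - apply (ex_comp1 _ T _ (denote e)); auto. apply ex_tri.
  - apply (ex_comp1 _ wfun _ (denote e)); auto. apply ex_w.
Qed.

Fixpoint esub (s : list expr) (e : expr) : expr :=
  match e with
  | EV k => nth k s (EC 0)
  | EC k => EC k
  | EAdd a b => EAdd (esub s a) (esub s b)
  | ESub a b => ESub (esub s a) (esub s b)
  | ETri a => ETri (esub s a)
  | EW a => EW (esub s a)
  end.

Lemma denote_esub s e args : denote (esub s e) args = denote e (map (fun d => denote d args) s).
Proof.
  induction e; simpl; try congruence.
  rewrite <- (map_nth (fun d => denote d args) s (EC 0) k). reflexivity.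
Qed.

Lemma T_mono a b : a <= b -> T a <= T b.
Proof. induction 1; [lia| rewrite T_S; lia]. Qed.

Lemma wfun_inv c : T (wfun c) <= c < T (S (wfun c)).
Proof.
  induction c as [|c IH]; [simpl; unfold T; simpl; lia|].
  cbn [wfun]. set (w := wfun c) in *.
  destruct (Nat.le_gt_cases (T (S w)) (S c)) as [Hle|Hgt].
  - replace (1 - (T (S w) - S c)) with 1 by lia.
    replace (w + 1) with (S w) by lia. rewrite (T_S (S w)). lia.
  - replace (1 - (T (S w) - S c)) with 0 by lia. rewrite Nat.add_0_r.
    rewrite T_S in *. lia.
Qed.

Lemma of_nat_w c : of_nat c = (wfun c - (c - T (wfun c)), c - T (wfun c)).
Proof.
  pose proof (wfun_inv c) as [H1 H2]. rewrite T_S in H2.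
  set (w := wfun c) in *.
  replace c with (to_nat (w - (c - T w), c - T w)) at 1.
  - apply cancel_of_to.
  - rewrite to_nat_T. replace (c - T w + (w - (c - T w))) with w by lia. lia.
Qed.

Definition tn (x y : nat) : nat := to_nat (x, y).
Definition fo (c : nat) : nat := fst (of_nat c).
Definition so (c : nat) : nat := snd (of_nat c).
Lemma fo_tn x y : fo (tn x y) = x. Proof. unfold fo, tn. rewrite cancel_of_to. reflexivity. Qed.
Lemma so_tn x y : so (tn x y) = y. Proof. unfold so, tn. rewrite cancel_of_to. reflexivity. Qed.
Lemma tn_fo_so c : tn (fo c) (so c) = c.
Proof. unfold tn, fo, so. rewrite <- surjective_pairing. apply cancel_to_of. Qed.

Definition tnE a b := EAdd b (ETri (EAdd b a)).
Definition soE c := ESub c (ETri (EW c)).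
Definition foE c := ESub (EW c) (soE c).
Arguments tnE : simpl never.
Arguments soE : simpl never.
Arguments foE : simpl never.

Lemma den_tn a b args : denote (tnE a b) args = tn (denote a args) (denote b args).
Proof. reflexivity. Qed.
Lemma den_so c args : denote (soE c) args = so (denote c args).
Proof. unfold so. rewrite of_nat_w. reflexivity. Qed.
Lemma den_fo c args : denote (foE c) args = fo (denote c args).
Proof. unfold fo. rewrite of_nat_w. reflexivity. Qed.

Inductive bexpr : Type :=
| BEq (a b : expr) | BLe (a b : expr) | BLt (a b : expr)
| BAnd (a b : bexpr) | BOr (a b : bexpr) | BNot (a : bexpr).

Fixpoint bdenote (be : bexpr) (args : list nat) : bool :=
  match be with
  | BEq a b => denote a args =? denote b args
  | BLe a b => denote a args <=? denote b args
  | BLt a b => denote a args <? denote b args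
  | BAnd a b => bdenote a args && bdenote b args
  | BOr a b => bdenote a args || bdenote b args
  | BNot a => negb (bdenote a args)
  end.

Fixpoint bcomp (be : bexpr) : expr :=
  match be with
  | BEq a b => ESub (EC 1) (EAdd (ESub a b) (ESub b a))
  | BLe a b => ESub (EC 1) (ESub a b)
  | BLt a b => ESub (EC 1) (ESub (EAdd (EC 1) a) b)
  | BAnd a b => ESub (EC 1) (EAdd (ESub (EC 1) (bcomp a)) (ESub (EC 1) (bcomp b)))
  | BOr a b => ESub (EC 1) (ESub (EC 1) (EAdd (bcomp a) (bcomp b)))
  | BNot a => ESub (EC 1) (bcomp a)
  end.

Lemma bcomp_ok be args : denote (bcomp be) args = Nat.b2n (bdenote be args).
Proof.
  induction be; cbn [bcomp bdenote denote].
  - destruct (Nat.eqb_spec (denote a args) (denote b args)); cbn [Nat.b2n]; lia.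
  - destruct (Nat.leb_spec (denote a args) (denote b args)); cbn [Nat.b2n]; lia.
  - destruct (Nat.ltb_spec (denote a args) (denote b args)); cbn [Nat.b2n]; lia.
  - rewrite IHbe1, IHbe2. destruct (bdenote be1 args), (bdenote be2 args); reflexivity.
  - rewrite IHbe1, IHbe2. destruct (bdenote be1 args), (bdenote be2 args); reflexivity.
  - rewrite IHbe. destruct (bdenote be args); reflexivity.
Qed.


Record prm := mkprm { pb : nat; pt : nat; i1 : nat; a1 : nat; p1 : nat; q1 : nat; x1 : nat;
  i2 : nat; a2 : nat; p2 : nat; q2 : nat; x2 : nat; pu : nat; pv : nat }.

Definition plist (P : prm) : list nat :=
  [pb P; pt P; i1 P; a1 P; p1 P; q1 P; x1 P; i2 P; a2 P; p2 P; q2 P; x2 P; pu P; pv P].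

Definition enc (i a x : nat) : nat := tn i (tn a x).
Definition e1 P := enc (i1 P) (a1 P) (x1 P).
Definition e2 P := enc (i2 P) (a2 P) (x2 P).

Definition alphaOf (P : prm) : list basic :=
  [(true, ALt (p1 P) (a1 P)); (true, ALt (a1 P) (q1 P));
   (true, ALt (p2 P) (a2 P)); (true, ALt (a2 P) (q2 P)); (true, ALt (pu P) (pv P))].
Definition phiOf (P : prm) : basic :=
  (pb P =? 1, if pt P =? 0 then AEq (e1 P) (e2 P) else ALt (e1 P) (e2 P)).

Definition E1e := tnE (EV 2) (tnE (EV 3) (EV 6)).
Definition E2e := tnE (EV 7) (tnE (EV 8) (EV 11)).
Definition validE (p q x : expr) := BOr (BAnd (BEq x p) (BLe p q)) (BAnd (BEq x q) (BLe q p)).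
Definition uvE (u v : expr) := BAnd (BEq (EV 12) u) (BEq (EV 13) v).
Definition c1E := BAnd (BEq (EV 1) (EC 0)) (BAnd (BEq (EV 0) (EC 1)) (BAnd (BEq E1e E2e) (uvE (EV 4) (EV 3)))).
Definition c2E := BAnd (BEq (EV 1) (EC 0)) (BAnd (BEq (EV 0) (EC 0)) (BAnd (BNot (BEq E1e E2e)) (uvE (EV 4) (EV 3)))).
Definition c3E := BAnd (BEq (EV 1) (EC 1)) (BAnd (BEq (EV 0) (EC 1))
  (BOr (BAnd (BLt (EV 2) (EV 7)) (uvE (EV 4) (EV 3)))
  (BOr (BAnd (BEq (EV 2) (EV 7)) (uvE (EV 3) (EV 8)))
       (BAnd (BEq (EV 2) (EV 7)) (BAnd (BEq (EV 3) (EV 8)) (uvE (EV 6) (EV 11))))))).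
Definition c4E := BAnd (BEq (EV 1) (EC 1)) (BAnd (BEq (EV 0) (EC 0))
  (BOr (BAnd (BLt (EV 7) (EV 2)) (uvE (EV 4) (EV 3)))
  (BOr (BAnd (BEq (EV 2) (EV 7)) (uvE (EV 8) (EV 3)))
  (BOr (BAnd (BEq (EV 2) (EV 7)) (BAnd (BEq (EV 3) (EV 8)) (uvE (EV 11) (EV 6))))
       (BAnd (BEq (EV 2) (EV 7)) (BAnd (BEq (EV 3) (EV 8)) (BAnd (BEq (EV 6) (EV 11)) (uvE (EV 4) (EV 3))))))))).
Definition condBE (n : nat) : bexpr :=
  BAnd (BLe (EV 0) (EC 1)) (BAnd (BLe (EV 1) (EC 1)) (BAnd (BLt (EV 2) (EC n)) (BAnd (BLt (EV 7) (EC n))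
  (BAnd (validE (EV 4) (EV 5) (EV 6)) (BAnd (validE (EV 9) (EV 10) (EV 11))
  (BOr c1E (BOr c2E (BOr c3E c4E)))))))).

Definition condb (n : nat) (P : prm) : bool := bdenote (condBE n) (plist P).

Definition CondP (n : nat) (P : prm) : Prop :=
  pb P <= 1 /\ pt P <= 1 /\ i1 P < n /\ i2 P < n /\
  ((x1 P = p1 P /\ p1 P <= q1 P) \/ (x1 P = q1 P /\ q1 P <= p1 P)) /\
  ((x2 P = p2 P /\ p2 P <= q2 P) \/ (x2 P = q2 P /\ q2 P <= p2 P)) /\
  ((pt P = 0 /\ pb P = 1 /\ e1 P = e2 P /\ pu P = p1 P /\ pv P = a1 P) \/
   (pt P = 0 /\ pb P = 0 /\ e1 P <> e2 P /\ pu P = p1 P /\ pv P = a1 P) \/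
   (pt P = 1 /\ pb P = 1 /\
     ((i1 P < i2 P /\ pu P = p1 P /\ pv P = a1 P) \/
      (i1 P = i2 P /\ pu P = a1 P /\ pv P = a2 P) \/
      (i1 P = i2 P /\ a1 P = a2 P /\ pu P = x1 P /\ pv P = x2 P))) \/
   (pt P = 1 /\ pb P = 0 /\
     ((i2 P < i1 P /\ pu P = p1 P /\ pv P = a1 P) \/
      (i1 P = i2 P /\ pu P = a2 P /\ pv P = a1 P) \/
      (i1 P = i2 P /\ a1 P = a2 P /\ pu P = x2 P /\ pv P = x1 P) \/
      (i1 P = i2 P /\ a1 P = a2 P /\ x1 P = x2 P /\ pu P = p1 P /\ pv P = a1 P)))).

Lemma condb_spec n P : condb n P = true <-> CondP n P.
Proof.
  destruct P. unfold condb, condBE, CondP, c1E, c2E, c3E, c4E, uvE, validE, E1e, E2e, e1, e2, enc.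
  cbn [bdenote]. rewrite !den_tn. cbn [denote plist nth].
  cbn [pb pt i1 a1 p1 q1 x1 i2 a2 p2 q2 x2 pu pv].
  repeat (rewrite ?andb_true_iff, ?orb_true_iff, ?negb_true_iff, ?Nat.eqb_eq, ?Nat.leb_le, ?Nat.ltb_lt, ?Nat.eqb_neq).
  tauto.
Qed.

Definition Gam (n : nat) (alpha : list basic) (phi : basic) : Prop :=
  exists P, condb n P = true /\ alpha = alphaOf P /\ phi = phiOf P.

Definition cbE u v := tnE (EC 1) (tnE (EC 1) (tnE u v)).
Definition consE h t := EAdd (EC 1) (tnE h t).
Definition listE := consE (cbE (EV 4) (EV 3)) (consE (cbE (EV 3) (EV 5)) (consE (cbE (EV 9) (EV 8))
   (consE (cbE (EV 8) (EV 10)) (consE (cbE (EV 12) (EV 13)) (EC 0))))).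
Definition codeE := tnE listE (tnE (EV 0) (tnE (EV 1) (tnE E1e E2e))).

Lemma code_ok P : pb P <= 1 -> pt P <= 1 ->
  to_nat (code_list (alphaOf P), code_basic (phiOf P)) = denote codeE (plist P).
Proof.
  intros Hb Ht. destruct P; cbn in Hb, Ht.
  unfold codeE, listE, consE, cbE, E1e, E2e. rewrite !den_tn. cbn [denote plist nth].
  rewrite !den_tn. cbn [denote plist nth].
  unfold alphaOf, phiOf, e1, e2, enc. cbn [pb pt i1 a1 p1 q1 x1 i2 a2 p2 q2 x2 pu pv].
  unfold tn.
  destruct pb0 as [|[|]]; [| |lia]; destruct pt0 as [|[|]]; try lia; reflexivity.
Qed.

Definition nodeE t := ESub t (EC 1).
Definition headE t := foE (nodeE t).
Definition tailE t := soE (nodeE t).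
Definition uOf cb := foE (soE (soE cb)).
Definition vOf cb := soE (soE (soE cb)).
Definition LE := foE (EV 0).
Definition PhE := soE (EV 0).
Definition T1E := tailE LE.
Definition T2E := tailE T1E.
Definition T3E := tailE T2E.
Definition T4E := tailE T3E.
Definition cb1 := headE LE.
Definition cb2 := headE T1E.
Definition cb3 := headE T2E.
Definition cb4 := headE T3E.
Definition cb5 := headE T4E.
Definition eeE := soE (soE PhE).
Definition EE1 := foE eeE.
Definition EE2 := soE eeE.
Definition decE : list expr :=
  [foE PhE; foE (soE PhE); foE EE1; vOf cb1; uOf cb1; vOf cb2; soE (soE EE1);
   foE EE2; vOf cb3; uOf cb3; vOf cb4; soE (soE EE2); uOf cb5; vOf cb5].

Lemma sub1 x : S x - 1 = x. Proof. lia. Qed.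

Lemma dec_ok P : map (fun d => denote d [denote codeE (plist P)]) decE = plist P.
Proof.
  destruct P.
  unfold decE, cb1, cb2, cb3, cb4, cb5, T4E, T3E, T2E, T1E, LE, EE1, EE2, eeE, PhE, uOf, vOf,
    headE, tailE, nodeE, codeE, listE, consE, cbE, E1e, E2e.
  cbn [map].
  repeat progress (rewrite ?den_fo, ?den_so, ?den_tn; cbn [denote nth plist]).
  cbn [pb pt i1 a1 p1 q1 x1 i2 a2 p2 q2 x2 pu pv plist].
  repeat progress (rewrite ?fo_tn, ?so_tn, ?sub1).
  reflexivity.
Qed.

Fixpoint bsub (s : list expr) (be : bexpr) : bexpr :=
  match be with
  | BEq a b => BEq (esub s a) (esub s b)
  | BLe a b => BLe (esub s a) (esub s b)
  | BLt a b => BLt (esub s a) (esub s b)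
  | BAnd a b => BAnd (bsub s a) (bsub s b)
  | BOr a b => BOr (bsub s a) (bsub s b)
  | BNot a => BNot (bsub s a)
  end.

Lemma bdenote_bsub s be args : bdenote (bsub s be) args = bdenote be (map (fun d => denote d args) s).
Proof. induction be; simpl; rewrite ?denote_esub; congruence. Qed.

Definition chiBE n := BAnd (BEq (EV 0) (esub decE codeE)) (bsub decE (condBE n)).


Lemma chi_spec n c : bdenote (chiBE n) [c] = true <->
  exists P, condb n P = true /\ c = denote codeE (plist P).
Proof.
  unfold chiBE. cbn [bdenote]. rewrite denote_esub, bdenote_bsub. cbn [denote nth].
  split.
  - intro H. apply andb_true_iff in H as [H1 H2]. apply Nat.eqb_eq in H1.
    set (l := map (fun d => denote d [c]) decE) in *.
    exists (mkprm (nth 0 l 0) (nth 1 l 0) (nth 2 l 0) (nth 3 l 0) (nth 4 l 0) (nth 5 l 0) (nth 6 l 0)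
      (nth 7 l 0) (nth 8 l 0) (nth 9 l 0) (nth 10 l 0) (nth 11 l 0) (nth 12 l 0) (nth 13 l 0)).
    unfold condb. split. exact H2. exact H1.
  - intros (P & HP & ->). rewrite dec_ok. rewrite Nat.eqb_refl. exact HP.
Qed.


Definition prog n := PMu (compile (esub [EV 1] (bcomp (BNot (chiBE n))))).

Lemma prog_val n m c y : eval (compile (esub [EV 1] (bcomp (BNot (chiBE n))))) (m :: [c]) y <->
  y = Nat.b2n (negb (bdenote (chiBE n) [c])).
Proof.
  rewrite (compile_exact (esub [EV 1] (bcomp (BNot (chiBE n))))).
  rewrite denote_esub. 
  change (map (fun d : expr => denote d [m; c]) [EV 1]) with [c].
  rewrite (bcomp_ok (BNot (chiBE n))). reflexivity.
Qed.

Lemma inv_mu f args m : eval (PMu f) args m -> eval f (m :: args) 0.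
Proof. intro H; inversion H; assumption. Qed.

Lemma ce_Gam n : enum_operator (Gam n).
Proof.
  exists (prog n). intro c. split.
  - intros (alpha & phi & -> & P & Hc & -> & ->).
    pose proof Hc as Hc'. apply condb_spec in Hc' as (Hb & Ht & _).
    rewrite code_ok by assumption.
    exists 0. unfold prog. apply ev_mu.
    + apply prog_val. assert (bdenote (chiBE n) [denote codeE (plist P)] = true) as E
        by (apply chi_spec; eauto). rewrite E. reflexivity.
    + intros m Hm; lia.
  - intros (y & H). unfold prog in H.
    pose proof (inv_mu _ _ _ H) as H1.
    apply prog_val in H1.
    destruct (bdenote (chiBE n) [c]) eqn:E; [|discriminate].
    apply chi_spec in E as (P & HP & ->).
    exists (alphaOf P), (phiOf P). split.
    + apply condb_spec in HP as (Hb & Ht & _). symmetry; apply code_ok; assumption.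
    + exists P; auto.
Qed.


Definition Wit (A : structure) (a x : nat) : Prop :=
  exists p q, sdom A p /\ sdom A a /\ sdom A q /\ srel A p a /\ srel A a q /\
    ((x = p /\ p <= q) \/ (x = q /\ q <= p)).

Definition ga e := fo (so e).
Definition gx e := so (so e).

Definition FArel (A : structure) (e e' : nat) : Prop :=
  fo e < fo e' \/ (fo e = fo e' /\ (srel A (ga e) (ga e') \/ (ga e = ga e' /\ srel A (gx e) (gx e')))).

Definition FA (n : nat) (A : structure) : structure :=
  Struct (fun e => exists i a x, e = enc i a x /\ i < n /\ Wit A a x) (FArel A).

Definition LO (A : structure) : Prop :=
  (forall x, sdom A x -> ~ srel A x x) /\
  (forall x y z, sdom A x -> sdom A y -> sdom A z -> srel A x y -> srel A y z -> srel A x z) /\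
  (forall x y, sdom A x -> sdom A y -> x = y \/ srel A x y \/ srel A y x).

Lemma fo_enc i a x : fo (enc i a x) = i. Proof. unfold enc. apply fo_tn. Qed.
Lemma ga_enc i a x : ga (enc i a x) = a. Proof. unfold ga, enc. rewrite so_tn. apply fo_tn. Qed.
Lemma gx_enc i a x : gx (enc i a x) = x. Proof. unfold gx, enc. rewrite !so_tn. reflexivity. Qed.

Lemma diag_lt A u v : diag A (true, ALt u v) <-> sdom A u /\ sdom A v /\ srel A u v.
Proof. unfold diag; simpl; tauto. Qed.

Lemma mk_apply n A P : CondP n P ->
  srel A (p1 P) (a1 P) -> srel A (a1 P) (q1 P) -> srel A (p2 P) (a2 P) -> srel A (a2 P) (q2 P) ->
  srel A (pu P) (pv P) ->
  sdom A (p1 P) -> sdom A (a1 P) -> sdom A (q1 P) -> sdom A (p2 P) -> sdom A (a2 P) -> sdom A (q2 P) ->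
  sdom A (pu P) -> sdom A (pv P) ->
  apply_op (Gam n) (diag A) (phiOf P).
Proof.
  intros HC. intros. exists (alphaOf P). split.
  - exists P. split; [apply condb_spec; exact HC| auto].
  - intros psi Hin. simpl in Hin.
    destruct Hin as [<-|[<-|[<-|[<-|[<-|[]]]]]]; apply diag_lt; auto.
Qed.

Lemma Wit_dom A a x : Wit A a x -> sdom A a /\ sdom A x.
Proof. intros (p & q & Hp & Ha & Hq & _ & _ & [[-> _]|[-> _]]); auto. Qed.

Lemma diag_FA n A : LO A -> forall phi, diag (FA n A) phi <-> apply_op (Gam n) (diag A) phi.
Proof.
  intros (Hirr & Htr & Htri) [b atm]. split.
  - intros [Hc Hh]. destruct atm as [u v|u v]; simpl in Hc;
    destruct Hc as [(i & a & x & -> & Hi & p & q & Hp & Ha & Hq & Hpa & Haq & Hx)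
                    (i' & a' & x' & -> & Hi' & p' & q' & Hp' & Ha' & Hq' & Hpa' & Haq' & Hx')];
    destruct b; simpl in Hh.
    +
      set (P := mkprm 1 0 i a p q x i' a' p' q' x' p a).
      replace (true, AEq (enc i a x) (enc i' a' x')) with (phiOf P) by reflexivity.
      apply mk_apply; simpl; auto.
      unfold CondP; simpl. unfold e1, e2; simpl. intuition lia.
    + set (P := mkprm 0 0 i a p q x i' a' p' q' x' p a).
      replace (false, AEq (enc i a x) (enc i' a' x')) with (phiOf P) by reflexivity.
      apply mk_apply; simpl; auto.
      unfold CondP; simpl. unfold e1, e2; simpl. intuition lia.
    + unfold FArel in Hh. rewrite !fo_enc, !ga_enc, !gx_enc in Hh.
      destruct Hh as [Hlt|[-> [Hlt|[-> Hlt]]]].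
      * set (P := mkprm 1 1 i a p q x i' a' p' q' x' p a).
        replace (true, ALt (enc i a x) (enc i' a' x')) with (phiOf P) by reflexivity.
        apply mk_apply; simpl; auto.
        unfold CondP; simpl. intuition lia.
      * set (P := mkprm 1 1 i' a p q x i' a' p' q' x' a a').
        replace (true, ALt (enc i' a x) (enc i' a' x')) with (phiOf P) by reflexivity.
        apply mk_apply; simpl; auto.
        unfold CondP; simpl. intuition lia.
      * assert (sdom A x /\ sdom A x') as [Hdx Hdx'].
        { split; destruct Hx as [[-> _]|[-> _]]; auto; destruct Hx' as [[-> _]|[-> _]]; auto. }
        set (P := mkprm 1 1 i' a' p q x i' a' p' q' x' x x').
        replace (true, ALt (enc i' a' x) (enc i' a' x')) with (phiOf P) by reflexivity.
        apply mk_apply; simpl; auto.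
        unfold CondP; simpl. intuition lia.
    + unfold FArel in Hh. rewrite !fo_enc, !ga_enc, !gx_enc in Hh.
      assert (sdom A x /\ sdom A x') as [Hdx Hdx'].
      { split; destruct Hx as [[-> _]|[-> _]]; auto; destruct Hx' as [[-> _]|[-> _]]; auto. }
      destruct (Nat.lt_trichotomy i i') as [Hlt|[<-|Hlt]]; [exfalso; tauto| |].
      * destruct (Htri a a' Ha Ha') as [<-|[Haa|Haa]]; [|exfalso; tauto|].
        -- destruct (Htri x x' Hdx Hdx') as [<-|[Hxx|Hxx]]; [|exfalso; tauto|].
           ++ set (P := mkprm 0 1 i a p q x i a p' q' x p a).
              replace (false, ALt (enc i a x) (enc i a x)) with (phiOf P) by reflexivity.
              apply mk_apply; simpl; auto.
              unfold CondP; simpl. intuition lia.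
           ++ set (P := mkprm 0 1 i a p q x i a p' q' x' x' x).
              replace (false, ALt (enc i a x) (enc i a x')) with (phiOf P) by reflexivity.
              apply mk_apply; simpl; auto.
              unfold CondP; simpl. intuition lia.
        -- set (P := mkprm 0 1 i a p q x i a' p' q' x' a' a).
           replace (false, ALt (enc i a x) (enc i a' x')) with (phiOf P) by reflexivity.
           apply mk_apply; simpl; auto.
           unfold CondP; simpl. intuition lia.
      * set (P := mkprm 0 1 i a p q x i' a' p' q' x' p a).
        replace (false, ALt (enc i a x) (enc i' a' x')) with (phiOf P) by reflexivity.
        apply mk_apply; simpl; auto.
        unfold CondP; simpl. intuition lia.
  - intros (alpha & (P & HP & -> & ->) & Hal).
    apply condb_spec in HP.
    assert (F1 := Hal _ (or_introl eq_refl)).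
    assert (F2 := Hal _ (or_intror (or_introl eq_refl))).
    assert (F3 := Hal _ (or_intror (or_intror (or_introl eq_refl)))).
    assert (F4 := Hal _ (or_intror (or_intror (or_intror (or_introl eq_refl))))).
    assert (F5 := Hal _ (or_intror (or_intror (or_intror (or_intror (or_introl eq_refl)))))).
    apply diag_lt in F1, F2, F3, F4, F5.
    destruct P as [b0 t i a p q x i' a' p' q' x' u v]; simpl in *.
    unfold CondP in HP; simpl in HP. unfold e1, e2 in HP; simpl in HP.
    destruct HP as (Hb & Ht & Hi & Hi' & Hx & Hx' & Hcase).
    assert (D1 : sdom (FA n A) (enc i a x)).
    { exists i, a, x. repeat split; auto. exists p, q. intuition. }
    assert (D2 : sdom (FA n A) (enc i' a' x')).
    { exists i', a', x'. repeat split; auto. exists p', q'. intuition. }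
    assert (Hdx : sdom A x) by (destruct Hx as [[-> _]|[-> _]]; tauto).
    assert (Hdx' : sdom A x') by (destruct Hx' as [[-> _]|[-> _]]; tauto).
    unfold phiOf, e1, e2; simpl.
    destruct Hcase as [(-> & -> & E & _)|[(-> & -> & E & _)|[(-> & -> & C)|(-> & -> & C)]]];
      simpl; unfold diag; simpl; split; auto; unfold FArel; rewrite ?fo_enc, ?ga_enc, ?gx_enc.
    + destruct C as [(H & -> & ->)|[(-> & -> & ->)|(-> & -> & -> & ->)]]; intuition.
    + destruct C as [(H & -> & ->)|[(-> & -> & ->)|[(-> & -> & -> & ->)|(-> & -> & -> & -> & ->)]]].
      * lia.
      * intros [H|[_ [H|[-> H]]]]; [lia| |].
        -- apply (Hirr a); [tauto|]. apply (Htr a a' a); tauto.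
        -- apply (Hirr a'); intuition.
      * intros [H|[_ [H|[_ H]]]]; [lia| apply (Hirr a'); intuition |].
        apply (Hirr x); [tauto|]. apply (Htr x x' x); tauto.
      * intros [H|[_ [H|[_ H]]]]; [lia| apply (Hirr a'); intuition | apply (Hirr x'); intuition].
Qed.


Fixpoint cnt (P : nat -> Prop) (N : nat) : nat :=
  match N with
  | 0 => 0
  | S m => cnt P m + (if excluded_middle_informative (P m) then 1 else 0)
  end.

Lemma cnt_le P Q N : (forall y, y < N -> P y -> Q y) -> cnt P N <= cnt Q N.
Proof.
  induction N; intro H; simpl; [lia|].
  assert (IH : cnt P N <= cnt Q N) by (apply IHN; intros; apply H; auto; lia).
  destruct (excluded_middle_informative (P N)), (excluded_middle_informative (Q N)); try lia.
  exfalso; apply n; apply H; auto.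
Qed.

Lemma cnt_lt P Q N : (forall y, y < N -> P y -> Q y) -> (exists z, z < N /\ Q z /\ ~ P z) ->
  cnt P N < cnt Q N.
Proof.
  induction N; intros H (z & Hz & HQ & HP); [lia|]. simpl.
  destruct (Nat.eq_dec z N) as [->|Hne].
  - assert (cnt P N <= cnt Q N) by (apply cnt_le; intros; apply H; auto; lia).
    destruct (excluded_middle_informative (P N)), (excluded_middle_informative (Q N)); tauto || lia.
  - assert (cnt P N < cnt Q N) by (apply IHN; [intros; apply H; auto; lia| exists z; repeat split; auto; lia]).
    destruct (excluded_middle_informative (P N)), (excluded_middle_informative (Q N)); try lia.
    exfalso; apply n; apply H; auto.
Qed.

Lemma cnt_ext P Q N : (forall y, y < N -> (P y <-> Q y)) -> cnt P N = cnt Q N.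
Proof.
  intro H. apply Nat.le_antisymm; apply cnt_le; intros y Hy; apply H; auto.
Qed.

Lemma cnt_stable P N M : (forall y, P y -> y < N) -> N <= M -> cnt P M = cnt P N.
Proof.
  intros H HM. induction HM; [reflexivity|]. simpl. rewrite IHHM.
  destruct (excluded_middle_informative (P m)) as [Hp|]; [|lia].
  apply H in Hp. lia.
Qed.

Lemma cnt_pos P N : 0 < cnt P N -> exists y, y < N /\ P y.
Proof.
  induction N; simpl; intro H; [lia|].
  destruct (excluded_middle_informative (P N)) as [Hp|Hp].
  - exists N; auto.
  - destruct IHN as (y & Hy & HPy); [lia|]. exists y; split; auto.
Qed.

Lemma cnt_add1 P Q N z : (forall y, y < N -> (Q y <-> P y \/ y = z)) -> z < N -> ~ P z ->
  cnt Q N = S (cnt P N).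
Proof.
  induction N; intros H Hz HP; [lia|]. simpl.
  destruct (Nat.eq_dec z N) as [->|Hne].
  - assert (cnt Q N = cnt P N).
    { apply cnt_ext. intros y Hy. rewrite H by lia. split; [intros [?|?]; auto; lia| auto]. }
    destruct (excluded_middle_informative (P N)) as [|_]; [tauto|].
    destruct (excluded_middle_informative (Q N)) as [|HQ]; [lia|].
    exfalso; apply HQ; apply H; auto.
  - rewrite IHN; [| intros y Hy; apply H; lia | lia | exact HP].
    destruct (excluded_middle_informative (P N)) as [HPN|HPN], (excluded_middle_informative (Q N)) as [HQN|HQN]; try lia.
    + exfalso; apply HQN; apply H; auto.
    + apply H in HQN; [|lia]. destruct HQN; [tauto|lia].
Qed.

Lemma min_exists (Q : nat -> Prop) (f : nat -> nat) : (exists x, Q x) ->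
  exists x, Q x /\ forall y, Q y -> f x <= f y.
Proof.
  intros (x & Hx).
  assert (forall m x, Q x -> f x <= m -> exists x0, Q x0 /\ forall y, Q y -> f x0 <= f y) as G.
  { induction m; intros x' Hx' Hf.
    - exists x'. split; auto. intros; lia.
    - destruct (classic (exists y, Q y /\ f y <= m)) as [(y & Hy & Hfy)|Hn].
      + eapply IHm; eauto.
      + exists x'. split; auto. intros y Hy.
        destruct (Nat.le_gt_cases (f y) m); [exfalso; apply Hn; eauto| lia]. }
  eapply G; eauto.
Qed.

Definition bnd (S : nat -> Prop) (R : nat -> nat -> Prop) (x : nat) : nat :=
  match excluded_middle_informative (exists N, forall y, S y -> R y x -> y < N) with
  | left H => proj1_sig (constructive_indefinite_description _ H)
  | right _ => 0
  end.

Lemma bnd_spec S R x : (exists N, forall y, S y -> R y x -> y < N) ->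
  forall y, S y -> R y x -> y < bnd S R x.
Proof.
  intros H. unfold bnd. destruct (excluded_middle_informative _) as [H'|H']; [|tauto].
  destruct (constructive_indefinite_description _ H'). simpl. auto.
Qed.

Definition rank S R x := cnt (fun y => S y /\ R y x) (bnd S R x).

Lemma omega_rank (Sx : nat -> Prop) (R : nat -> nat -> Prop) :
  (forall x, Sx x -> ~ R x x) ->
  (forall x y z, Sx x -> Sx y -> Sx z -> R x y -> R y z -> R x z) ->
  (forall x y, Sx x -> Sx y -> x = y \/ R x y \/ R y x) ->
  (forall N, exists x, Sx x /\ N <= x) ->
  (forall x, Sx x -> exists N, forall y, Sx y -> R y x -> y < N) ->
  (forall x y, Sx x -> Sx y -> (R x y <-> rank Sx R x < rank Sx R y)) /\
  (forall k, exists x, Sx x /\ rank Sx R x = k).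
Proof.
  intros Hirr Htr Htri Hunb Hfin.
  assert (K2 : forall x M, Sx x -> (forall y, Sx y -> R y x -> y < M) ->
     rank Sx R x = cnt (fun y => Sx y /\ R y x) M).
  { intros x M Hx HM. unfold rank.
    set (B := bnd Sx R x).
    assert (HB : forall y, Sx y -> R y x -> y < B) by (apply bnd_spec; auto).
    rewrite <- (cnt_stable _ B (Nat.max B M)); [| intros y [Hs Hr]; auto | lia].
    rewrite <- (cnt_stable _ M (Nat.max B M)); [reflexivity| intros y [Hs Hr]; auto | lia]. }
  assert (K3 : forall x y, Sx x -> Sx y -> R x y -> rank Sx R x < rank Sx R y).
  { intros x y Hx Hy Hxy.
    set (M := bnd Sx R x + bnd Sx R y + x + 1).
    assert (Bx := bnd_spec Sx R x (Hfin x Hx)). assert (By := bnd_spec Sx R y (Hfin y Hy)).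
    rewrite (K2 x M Hx) by (intros z Hz Hzx; specialize (Bx z Hz Hzx); lia).
    rewrite (K2 y M Hy) by (intros z Hz Hzy; specialize (By z Hz Hzy); lia).
    apply cnt_lt.
    - intros z _ [Hz Hzx]. split; auto. apply (Htr z x y); auto.
    - exists x. repeat split; auto; [lia|]. intros [_ H]. apply (Hirr x); auto. }
  assert (K1 : forall x y, Sx x -> Sx y -> (R x y <-> rank Sx R x < rank Sx R y)).
  { intros x y Hx Hy. split; [apply K3; auto|].
    intro Hlt. destruct (Htri x y Hx Hy) as [->|[H|H]]; [lia|auto|].
    apply K3 in H; auto; lia. }
  split; [exact K1|].
  induction k.
  - destruct (Hunb 0) as (x0 & Hx0 & _).
    destruct (min_exists Sx (rank Sx R) (ex_intro _ x0 Hx0)) as (x & Hx & Hmin).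
    exists x. split; auto.
    destruct (Nat.eq_dec (rank Sx R x) 0) as [|Hne]; auto.
    unfold rank in Hne. destruct (cnt_pos _ _ (proj1 (Nat.neq_0_lt_0 _) Hne)) as (y & _ & Hy & Hyx).
    apply K3 in Hyx; auto. specialize (Hmin y Hy). lia.
  - destruct IHk as (x & Hx & Hrk).
    assert (Bx := bnd_spec Sx R x (Hfin x Hx)).
    destruct (Hunb (bnd Sx R x + x + 1)) as (z & Hz & Hzb).
    assert (Hxz : R x z).
    { destruct (Htri x z Hx Hz) as [->|[H|H]]; [lia|auto|]. specialize (Bx z Hz H). lia. }
    destruct (min_exists (fun y => Sx y /\ R x y) (rank Sx R) (ex_intro _ z (conj Hz Hxz)))
      as (m & [Hm Hxm] & Hmin).
    exists m. split; auto.
    assert (Hge : k < rank Sx R m) by (rewrite <- Hrk; apply K3; auto).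
    destruct (Nat.eq_dec (rank Sx R m) (Nat.succ k)) as [|Hne]; auto. exfalso.
    assert (Bm := bnd_spec Sx R m (Hfin m Hm)).
    set (M := bnd Sx R x + bnd Sx R m + x + m + 1).
    assert (Ex : rank Sx R x = cnt (fun y => Sx y /\ R y x) M)
      by (apply K2; auto; intros y Hy Hyx; specialize (Bx y Hy Hyx); lia).
    assert (Em : rank Sx R m = cnt (fun y => Sx y /\ R y m) M)
      by (apply K2; auto; intros y Hy Hym; specialize (Bm y Hy Hym); lia).
    destruct (classic (forall y, y < M -> ((Sx y /\ R y m) <-> ((Sx y /\ R y x) \/ y = x)))) as [Hall|Hn].
    + assert (cnt (fun y => Sx y /\ R y m) M = Nat.succ (cnt (fun y => Sx y /\ R y x) M)).
      { apply (cnt_add1 _ _ _ x); [exact Hall| lia |]. intros [_ H]. apply (Hirr x); auto. }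
      rewrite Em, H, <- Ex, Hrk in Hne. exact (Hne eq_refl).
    + apply not_all_ex_not in Hn as (y & Hy).
      apply imply_to_and in Hy as [HyM Hy].
      assert (Hsub : (Sx y /\ R y x) \/ y = x -> Sx y /\ R y m).
      { intros [[HSy HR]| ->]; [split; auto; apply (Htr y x m); auto| auto]. }
      assert (Hym : Sx y /\ R y m /\ ~ ((Sx y /\ R y x) \/ y = x)) by tauto.
      destruct Hym as (HSy & HRym & Hnot).
      assert (HRxy : R x y).
      { destruct (Htri x y Hx HSy) as [->|[H|H]]; [tauto|auto|tauto]. }
      specialize (Hmin y (conj HSy HRxy)). apply K3 in HRym; auto. lia.
Qed.

Definition clsS (D : nat -> Prop) (cp rw : nat -> nat) (c r : nat) : nat -> Prop :=
  fun x => D x /\ cp x = c /\ rw x = r.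

Definition hh (D : nat -> Prop) (R : nat -> nat -> Prop) (cp rw : nat -> nat) (c r : nat) : nat -> nat :=
  rank (clsS D cp rw c r) R.

Lemma ord_omega2_tn r k r' k' : ord_omega2 (tn r k) (tn r' k') <-> r < r' \/ (r = r' /\ k < k').
Proof.
  unfold ord_omega2. fold (fo (tn r k)) (fo (tn r' k')) (so (tn r k)) (so (tn r' k')).
  rewrite !fo_tn, !so_tn. reflexivity.
Qed.

Lemma mod_enc n c q : c < n -> (c + q * n) mod n = c.
Proof. intro H. rewrite Nat.Div0.mod_add. apply Nat.mod_small; auto. Qed.
Lemma div_enc n c q : c < n -> (c + q * n) / n = q.
Proof. intro H. rewrite Nat.div_add by lia. rewrite Nat.div_small; auto. Qed.

Lemma G_iso n (hn : 1 <= n) (D : nat -> Prop) (R : nat -> nat -> Prop) (cp rw : nat -> nat) :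
  LO (Struct D R) ->
  (forall x, D x -> cp x < n) ->
  (forall x y, D x -> D y -> R x y -> cp x < cp y \/ (cp x = cp y /\ rw x <= rw y)) ->
  (forall c r N, c < n -> exists x, D x /\ cp x = c /\ rw x = r /\ N <= x) ->
  (forall x, D x -> exists N, forall y, D y -> cp y = cp x -> rw y = rw x -> R y x -> y < N) ->
  iso (Struct D R) (omega2_times n).
Proof.
  intros (Hirr & Htr & Htri) Hcp Hmono Hunb Hfin. simpl in Hirr, Htr, Htri.
  assert (OR : forall c r, c < n ->
    (forall x y, clsS D cp rw c r x -> clsS D cp rw c r y -> (R x y <-> hh D R cp rw c r x < hh D R cp rw c r y)) /\
    (forall k, exists x, clsS D cp rw c r x /\ hh D R cp rw c r x = k)).
  { intros c r Hc. apply omega_rank.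
    - intros x [Hx _]; auto.
    - intros x y z [Hx _] [Hy _] [Hz _]; eauto.
    - intros x y [Hx _] [Hy _]; auto.
    - intros N. destruct (Hunb c r N Hc) as (x & Hx & H1 & H2 & H3). exists x; unfold clsS; auto.
    - intros x [Hx [Hc1 Hr1]]. destruct (Hfin x Hx) as [N HN]. exists N.
      intros y [Hy [Hc2 Hr2]] Hyx. apply HN; auto; congruence. }
  set (hx := fun x => hh D R cp rw (cp x) (rw x) x).
  set (f := fun x => cp x + tn (rw x) (hx x) * n).
  assert (Fw : forall x y, D x -> D y -> R x y ->
     cp x < cp y \/ (cp x = cp y /\ (rw x < rw y \/ (rw x = rw y /\ hx x < hx y)))).
  { intros x y Hx Hy Hxy. destruct (Hmono x y Hx Hy Hxy) as [H|[H1 H2]]; [auto|].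
    right. split; auto. destruct (Nat.eq_dec (rw x) (rw y)) as [E|E]; [|left; lia].
    right. split; auto. unfold hx. rewrite <- H1, <- E.
    destruct (OR (cp x) (rw x) (Hcp x Hx)) as [O _].
    apply O; unfold clsS; auto. }
  assert (Key : forall x y, D x -> D y ->
    (R x y <-> cp x < cp y \/ (cp x = cp y /\ (rw x < rw y \/ (rw x = rw y /\ hx x < hx y))))).
  { intros x y Hx Hy. split; [apply Fw; auto|]. intro H.
    destruct (Htri x y Hx Hy) as [->|[Hxy|Hyx]]; [lia|auto|].
    apply Fw in Hyx; auto. lia. }
  assert (Surj : forall z, exists x, D x /\ f x = z).
  { intro z. assert (Hz : z mod n < n) by (apply Nat.mod_upper_bound; lia).
    destruct (OR (z mod n) (fo (z / n)) Hz) as [_ O].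
    destruct (O (so (z / n))) as (x & (Hx & Hc & Hr) & Hk).
    exists x. split; auto. unfold f, hx. rewrite Hc, Hr, Hk, tn_fo_so.
    rewrite (Nat.div_mod_eq z n) at 3. lia. }
  set (g := fun z => proj1_sig (constructive_indefinite_description _ (Surj z))).
  assert (Hg : forall z, D (g z) /\ f (g z) = z).
  { intro z. unfold g. destruct (constructive_indefinite_description _ (Surj z)); simpl; auto. }
  assert (Fmod : forall x, D x -> f x mod n = cp x) by (intros; apply mod_enc; auto).
  assert (Fdiv : forall x, D x -> f x / n = tn (rw x) (hx x)) by (intros; apply div_enc; auto).
  assert (Finj : forall x y, D x -> D y -> f x = f y -> x = y).
  { intros x y Hx Hy E.
    assert (E1 : cp x = cp y) by (rewrite <- (Fmod x), <- (Fmod y), E; auto).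
    assert (E2 : tn (rw x) (hx x) = tn (rw y) (hx y)) by (rewrite <- (Fdiv x), <- (Fdiv y), E; auto).
    assert (E3 := f_equal fo E2). assert (E4 := f_equal so E2). rewrite !fo_tn in E3. rewrite !so_tn in E4.
    destruct (Htri x y Hx Hy) as [|[H|H]]; auto; apply Key in H; auto; lia. }
  exists f, g. split; [|split].
  - intros x Hx. split; [exact I|]. destruct (Hg (f x)) as [H1 H2]. apply Finj; auto.
  - intros y _. apply Hg.
  - intros x y Hx Hy. simpl. rewrite Key by auto. unfold ord_times.
    rewrite !Fmod, !Fdiv by auto. rewrite ord_omega2_tn. reflexivity.
Qed.


Lemma iso_sym A B : iso A B -> iso B A.
Proof.
  intros (f & g & H1 & H2 & H3). exists g, f. split; [|split].
  - intros y Hy. destruct (H2 y Hy); auto.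
  - intros x Hx. destruct (H1 x Hx); auto.
  - intros x y Hx Hy. destruct (H2 x Hx) as [Hgx Ex]. destruct (H2 y Hy) as [Hgy Ey].
    rewrite (H3 _ _ Hgx Hgy). rewrite Ex, Ey. reflexivity.
Qed.

Lemma iso_trans A B C : iso A B -> iso B C -> iso A C.
Proof.
  intros (f & g & H1 & H2 & H3) (f' & g' & H1' & H2' & H3').
  exists (fun x => f' (f x)), (fun z => g (g' z)). split; [|split].
  - intros x Hx. destruct (H1 x Hx) as [Hfx Ex]. destruct (H1' _ Hfx) as [Hf'x Ex'].
    split; auto. rewrite Ex'. auto.
  - intros z Hz. destruct (H2' z Hz) as [Hg'z Ez]. destruct (H2 _ Hg'z) as [Hgz Ez'].
    split; auto. rewrite Ez'. auto.
  - intros x y Hx Hy. destruct (H1 x Hx) as [Hfx _]. destruct (H1 y Hy) as [Hfy _].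
    rewrite (H3 _ _ Hx Hy). apply H3'; auto.
Qed.

Definition revS (A : structure) : structure := Struct (sdom A) (fun x y => srel A y x).

Lemma iso_rev A B : iso A B -> iso (revS A) (revS B).
Proof.
  intros (f & g & H1 & H2 & H3). exists f, g. split; [|split]; auto.
  intros x y Hx Hy. simpl. apply H3; auto.
Qed.

Lemma LO_iso A B : iso A B -> LO B -> LO A.
Proof.
  intros (f & g & H1 & H2 & H3) (Hirr & Htr & Htri). split; [|split].
  - intros x Hx H. rewrite (H3 x x Hx Hx) in H. destruct (H1 x Hx) as [Hfx _]. eapply Hirr; eauto.
  - intros x y z Hx Hy Hz Hxy Hyz. rewrite H3 in * by auto.
    destruct (H1 x Hx), (H1 y Hy), (H1 z Hz). apply (Htr (f x) (f y) (f z)); auto.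
  - intros x y Hx Hy. rewrite !(H3 _ _ Hx Hy), (H3 _ _ Hy Hx).
    destruct (H1 x Hx) as [Hfx Ex], (H1 y Hy) as [Hfy Ey].
    destruct (Htri _ _ Hfx Hfy) as [E|[H|H]]; auto.
    left. rewrite <- Ex, <- Ey, E. reflexivity.
Qed.

Lemma LO_times (L : nat -> nat -> Prop) k : 1 <= k ->
  (forall x, ~ L x x) -> (forall x y z, L x y -> L y z -> L x z) ->
  (forall x y, x = y \/ L x y \/ L y x) ->
  LO (Struct full_dom (ord_times L k)).
Proof.
  intros Hk Hirr Htr Htri. unfold ord_times. split; [|split]; simpl.
  - intros x _ [H|[_ H]]; [lia| eapply Hirr; eauto].
  - intros x y z _ _ _ [H1|[E1 H1]] [H2|[E2 H2]]; try lia.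
    right. split; [lia| eauto].
  - intros x y _ _.
    destruct (Nat.lt_trichotomy (x mod k) (y mod k)) as [H|[E|H]]; auto.
    destruct (Htri (x / k) (y / k)) as [E'|[H|H]]; auto.
    left. rewrite (Nat.div_mod_eq x k), (Nat.div_mod_eq y k), E, E'. reflexivity.
Qed.

Lemma LO_rev A : LO A -> LO (revS A).
Proof.
  intros (Hirr & Htr & Htri). split; [|split]; simpl; auto.
  - intros x y z Hx Hy Hz H1 H2. eauto.
  - intros x y Hx Hy. destruct (Htri x y Hx Hy) as [|[|]]; auto.
Qed.

Lemma LO_w2 : LO omega_times_2.
Proof. apply LO_times; unfold ord_omega; intros; lia. Qed.

Lemma LO_ws2 : LO omega_star_times_2.
Proof. apply LO_times; unfold ord_rev, ord_omega; intros; lia. Qed.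

Lemma LO_FA n A : LO A -> LO (FA n A).
Proof.
  intros (Hirr & Htr & Htri). unfold FA, FArel. split; [|split]; simpl.
  - intros e (i & a & x & -> & Hi & HW) H. apply Wit_dom in HW as [Ha Hx].
    rewrite fo_enc, ga_enc, gx_enc in H. destruct H as [H|[_ [H|[_ H]]]]; [lia| apply (Hirr a); auto| apply (Hirr x); auto].
  - intros e1 e2 e3 (i & a & x & -> & Hi & HW) (i' & a' & x' & -> & Hi' & HW') (i'' & a'' & x'' & -> & Hi'' & HW'').
    apply Wit_dom in HW as [Ha Hx]. apply Wit_dom in HW' as [Ha' Hx']. apply Wit_dom in HW'' as [Ha'' Hx''].
    rewrite !fo_enc, !ga_enc, !gx_enc.
    intros [H1|[E1 [H1|[E1' H1]]]] [H2|[E2 [H2|[E2' H2]]]]; subst; try lia; right; split; auto;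
    solve [left; auto | left; eapply Htr; [| | | eassumption | eassumption]; auto
          | right; split; [reflexivity| eapply Htr; [| | | eassumption| eassumption]; auto]].
  - intros e1 e2 (i & a & x & -> & Hi & HW) (i' & a' & x' & -> & Hi' & HW').
    apply Wit_dom in HW as [Ha Hx]. apply Wit_dom in HW' as [Ha' Hx'].
    rewrite !fo_enc, !ga_enc, !gx_enc.
    destruct (Nat.lt_trichotomy i i') as [H|[<-|H]]; auto.
    destruct (Htri a a' Ha Ha') as [<-|[H|H]]; auto.
    destruct (Htri x x' Hx Hx') as [<-|[H|H]]; auto.
    all: first [left; reflexivity | right; left; tauto | right; right; tauto].
Qed.

Lemma pigeon (h : nat -> nat) : (forall i j, h i = h j -> i = j) ->
  forall N K, exists k, K <= k /\ N <= h k.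
Proof.
  intros Hinj N K. apply NNPP. intro Hn.
  assert (Hall : forall k, K <= k -> h k < N).
  { intros k Hk. destruct (Nat.lt_ge_cases (h k) N); auto. exfalso; apply Hn; eauto. }
  assert (ND : NoDup (map h (seq K (S N)))).
  { apply FinFun.Injective_map_NoDup; [intros i j; apply Hinj| apply seq_NoDup]. }
  assert (Inc : incl (map h (seq K (S N))) (seq 0 N)).
  { intros z Hz. apply in_map_iff in Hz as (k & <- & Hk). apply in_seq in Hk. apply in_seq.
    specialize (Hall k ltac:(lia)). lia. }
  apply NoDup_incl_length in Inc; auto. rewrite length_map, !length_seq in Inc. lia.
Qed.

Lemma max_bound (h : nat -> nat) K : exists M, forall j, j <= K -> h j <= M.
Proof.
  induction K.
  - exists (h 0). intros j Hj. replace j with 0 by lia. lia.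
  - destruct IHK as [M HM]. exists (Nat.max M (h (S K))). intros j Hj.
    destruct (Nat.eq_dec j (S K)) as [->|]; [lia|]. specialize (HM j ltac:(lia)). lia.
Qed.

Lemma to_nat_mono x y x' y' : x <= x' -> y <= y' -> tn x y <= tn x' y'.
Proof. intros. unfold tn. rewrite !to_nat_T. assert (T (y + x) <= T (y' + x')) by (apply T_mono; lia). lia. Qed.

Lemma tn_ge x y : x <= tn x y /\ y <= tn x y.
Proof. unfold tn. pose proof (to_nat_non_decreasing x y). lia. Qed.


Lemma Wit_pred A a x : Wit A a x -> exists p, sdom A p /\ srel A p a /\ x <= p.
Proof. intros (p & q & Hp & Ha & Hq & Hpa & Haq & [[-> _]|[-> H]]); exists p; auto. Qed.

Lemma par_cases r : r = 0 \/ (exists m, r = 2 * m + 1) \/ (exists m, r = 2 * m + 2).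
Proof.
  induction r as [|r [->|[[m ->]|[m ->]]]]; [auto| | |].
  - right; left; exists 0; lia.
  - right; right; exists m; lia.
  - right; left; exists (S m); lia.
Qed.

Lemma dm2 z : z = 2 * (z / 2) + z mod 2 /\ z mod 2 < 2.
Proof. split; [apply Nat.div_mod; lia| apply Nat.mod_upper_bound; lia]. Qed.

Lemma mod2e j : (2 * j) mod 2 = 0 /\ (2 * j) / 2 = j.
Proof. replace (2 * j) with (0 + j * 2) by lia. split; [apply mod_enc| apply div_enc]; lia. Qed.
Lemma mod2o j : (2 * j + 1) mod 2 = 1 /\ (2 * j + 1) / 2 = j.
Proof. replace (2 * j + 1) with (1 + j * 2) by lia. split; [apply mod_enc| apply div_enc]; lia. Qed.

Definition rowF (fA : nat -> nat) (e : nat) : nat :=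
  if fA (ga e) mod 2 =? 0 then 0
  else if fA (gx e) mod 2 =? 0 then 2 * (fA (ga e) / 2) + 1 else 2 * (fA (ga e) / 2) + 2.

Lemma class_w2 n (hn : 1 <= n) A : iso A omega_times_2 -> iso (FA n A) (omega2_times n).
Proof.
  intro HI.
  assert (LOA : LO A) by (eapply LO_iso; [exact HI| apply LO_w2]).
  pose proof LOA as (Hirr & Htr & Htri).
  destruct HI as (fA & gA & H1 & H2 & H3).
  assert (Hord : forall u v, sdom A u -> sdom A v -> (srel A u v <->
     (fA u mod 2 < fA v mod 2 \/ (fA u mod 2 = fA v mod 2 /\ fA u / 2 < fA v / 2)))).
  { intros u v Hu Hv. rewrite (H3 u v Hu Hv). reflexivity. }
  assert (Hg : forall s, sdom A (gA s) /\ fA (gA s) = s) by (intro s; apply H2; exact I).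
  assert (Hgf : forall u, sdom A u -> gA (fA u) = u) by (intros u Hu; apply H1; auto).
  assert (Hrep : forall u, sdom A u -> u = gA (2 * (fA u / 2) + fA u mod 2)).
  { intros u Hu. rewrite <- (proj1 (dm2 (fA u))). symmetry; auto. }
  assert (InjX : forall i j, gA (2 * i) = gA (2 * j) -> i = j).
  { intros i j E. apply (f_equal fA) in E. rewrite (proj2 (Hg _)), (proj2 (Hg _)) in E. lia. }
  assert (InjY : forall i j, gA (2 * i + 1) = gA (2 * j + 1) -> i = j).
  { intros i j E. apply (f_equal fA) in E. rewrite (proj2 (Hg _)), (proj2 (Hg _)) in E. lia. }
  apply (G_iso n hn _ _ fo (rowF fA)).
  - apply LO_FA; exact LOA.
  - intros e (i & a & x & -> & Hi & _). rewrite fo_enc; auto.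
  - intros e e' (i & a & x & -> & Hi & HW) (i' & a' & x' & -> & Hi' & HW') HR.
    apply Wit_dom in HW as [Ha Hx]. apply Wit_dom in HW' as [Ha' Hx'].
    unfold FArel, rowF in *. rewrite !fo_enc, !ga_enc, !gx_enc in *.
    destruct HR as [HR|[E HR]]; [left; auto| right; split; auto].
    pose proof (dm2 (fA a)). pose proof (dm2 (fA a')). pose proof (dm2 (fA x)). pose proof (dm2 (fA x')).
    destruct HR as [HR|[<- HR]].
    + rewrite Hord in HR by auto.
      destruct (Nat.eqb_spec (fA a mod 2) 0), (Nat.eqb_spec (fA a' mod 2) 0),
        (Nat.eqb_spec (fA x mod 2) 0), (Nat.eqb_spec (fA x' mod 2) 0); lia.
    + rewrite Hord in HR by auto.
      destruct (Nat.eqb_spec (fA a mod 2) 0),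
        (Nat.eqb_spec (fA x mod 2) 0), (Nat.eqb_spec (fA x' mod 2) 0); lia.
  - intros c r N Hc.
    destruct (par_cases r) as [->|[[m ->]|[m ->]]].
    + destruct (pigeon (fun j => gA (2 * j)) InjX N 1) as (j & Hj & HNj).
      destruct (pigeon (fun j => gA (2 * j + 1)) InjY (gA (2 * 0)) 0) as (k & _ & Hk).
      exists (enc c (gA (2 * j)) (gA (2 * 0))). split; [|split; [|split]].
      * exists c, (gA (2 * j)), (gA (2 * 0)). split; [reflexivity| split; auto].
        exists (gA (2 * 0)), (gA (2 * k + 1)). split; [|split; [|split; [|split; [|split]]]]; try apply Hg.
        -- rewrite Hord by apply Hg. rewrite !(proj2 (Hg _)). rewrite !(proj1 (mod2e _)), !(proj2 (mod2e _)). lia.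
        -- rewrite Hord by apply Hg. rewrite !(proj2 (Hg _)). rewrite !(proj1 (mod2e _)), !(proj1 (mod2o _)). lia.
        -- left; split; auto.
      * apply fo_enc.
      * unfold rowF. rewrite ga_enc, gx_enc, (proj2 (Hg _)), (proj1 (mod2e _)). reflexivity.
      * unfold enc. pose proof (tn_ge c (tn (gA (2 * j)) (gA (2 * 0)))). pose proof (tn_ge (gA (2 * j)) (gA (2 * 0))). lia.
    + destruct (pigeon (fun j => gA (2 * j)) InjX N 0) as (j & _ & HNj).
      destruct (pigeon (fun j => gA (2 * j + 1)) InjY (gA (2 * j)) (S m)) as (k & Hkm & Hk).
      exists (enc c (gA (2 * m + 1)) (gA (2 * j))). split; [|split; [|split]].
      * exists c, (gA (2 * m + 1)), (gA (2 * j)). split; [reflexivity| split; auto].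
        exists (gA (2 * j)), (gA (2 * k + 1)). split; [|split; [|split; [|split; [|split]]]]; try apply Hg.
        -- rewrite Hord by apply Hg. rewrite !(proj2 (Hg _)). rewrite !(proj1 (mod2e _)), !(proj1 (mod2o _)). lia.
        -- rewrite Hord by apply Hg. rewrite !(proj2 (Hg _)). rewrite !(proj1 (mod2o _)), !(proj2 (mod2o _)). lia.
        -- left; split; auto.
      * apply fo_enc.
      * unfold rowF. rewrite ga_enc, gx_enc, !(proj2 (Hg _)), (proj1 (mod2o _)), (proj1 (mod2e _)), (proj2 (mod2o _)). reflexivity.
      * unfold enc. pose proof (tn_ge c (tn (gA (2 * m + 1)) (gA (2 * j)))). pose proof (tn_ge (gA (2 * m + 1)) (gA (2 * j))). lia.
    + destruct (pigeon (fun j => gA (2 * j + 1)) InjY N (S m)) as (k & Hkm & HNk).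
      destruct (pigeon (fun j => gA (2 * j)) InjX (gA (2 * k + 1)) 0) as (j & _ & Hj).
      exists (enc c (gA (2 * m + 1)) (gA (2 * k + 1))). split; [|split; [|split]].
      * exists c, (gA (2 * m + 1)), (gA (2 * k + 1)). split; [reflexivity| split; auto].
        exists (gA (2 * j)), (gA (2 * k + 1)). split; [|split; [|split; [|split; [|split]]]]; try apply Hg.
        -- rewrite Hord by apply Hg. rewrite !(proj2 (Hg _)). rewrite !(proj1 (mod2e _)), !(proj1 (mod2o _)). lia.
        -- rewrite Hord by apply Hg. rewrite !(proj2 (Hg _)). rewrite !(proj1 (mod2o _)), !(proj2 (mod2o _)). lia.
        -- right; split; auto.
      * apply fo_enc.
      * unfold rowF. rewrite ga_enc, gx_enc, !(proj2 (Hg _)), !(proj1 (mod2o _)), (proj2 (mod2o _)). reflexivity.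
      * unfold enc. pose proof (tn_ge c (tn (gA (2 * m + 1)) (gA (2 * k + 1)))). pose proof (tn_ge (gA (2 * m + 1)) (gA (2 * k + 1))). lia.
  - intros e (i & a & x & -> & Hi & HW).
    apply Wit_dom in HW as [Ha Hx].
    pose proof (dm2 (fA a)) as Da. pose proof (dm2 (fA x)) as Dx.
    destruct (Nat.eqb_spec (fA a mod 2) 0) as [Pa|Pa].
    + destruct (max_bound (fun j => gA (2 * j)) (fA a / 2)) as [M HM].
      exists (S (tn i (tn M M))).
      intros e' (i' & a' & x' & -> & Hi' & HW') Hc Hr HR.
      rewrite !fo_enc in Hc. subst i'.
      pose proof (Wit_pred _ _ _ HW') as (p & Hp & Hpa & Hxp).
      apply Wit_dom in HW' as [Ha' Hx'].
      unfold rowF, FArel in Hr, HR. rewrite ?fo_enc, ?ga_enc, ?gx_enc in Hr. rewrite ?fo_enc, ?ga_enc, ?gx_enc in HR.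
      rewrite Pa in Hr. cbn [Nat.eqb] in Hr.
      pose proof (dm2 (fA a')) as Da'. pose proof (dm2 (fA p)) as Dp.
      assert (Pa' : fA a' mod 2 = 0).
      { destruct (Nat.eqb_spec (fA a' mod 2) 0); auto. destruct (fA x' mod 2 =? 0); lia. }
      assert (Ia : fA a' / 2 <= fA a / 2).
      { destruct HR as [HR|[_ [HR|[<- _]]]]; [lia| rewrite Hord in HR by auto; lia| lia]. }
      rewrite Hord in Hpa by auto.
      assert (a' <= M) by (rewrite (Hrep a' Ha'), Pa', Nat.add_0_r; apply HM; auto).
      assert (p <= M) by (rewrite (Hrep p Hp); replace (fA p mod 2) with 0 by lia; rewrite Nat.add_0_r; apply HM; lia).
      unfold enc. pose proof (to_nat_mono i (tn a' x') i (tn M M) (le_n _) (to_nat_mono a' x' M M ltac:(lia) ltac:(lia))). lia.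
    + destruct (Nat.eqb_spec (fA x mod 2) 0) as [Px|Px].
      * destruct (max_bound (fun j => gA (2 * j)) (fA x / 2)) as [M HM].
        exists (S (tn i (tn a M))).
        intros e' (i' & a' & x' & -> & Hi' & HW') Hc Hr HR.
        rewrite !fo_enc in Hc. subst i'.
        apply Wit_dom in HW' as [Ha' Hx'].
        unfold rowF, FArel in Hr, HR. rewrite ?fo_enc, ?ga_enc, ?gx_enc in Hr. rewrite ?fo_enc, ?ga_enc, ?gx_enc in HR.
        pose proof (dm2 (fA a')) as Da'. pose proof (dm2 (fA x')) as Dx'.
        revert Hr.
        destruct (Nat.eqb_spec (fA a mod 2) 0) as [|_]; [lia|]. rewrite Px.
        destruct (Nat.eqb_spec (fA a' mod 2) 0) as [|Pa']; [cbn [Nat.eqb]; lia|].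
        destruct (Nat.eqb_spec (fA x' mod 2) 0) as [Px'|Px']; cbn [Nat.eqb]; intro Hr; [|lia].
        assert (Ea : a' = a) by (rewrite (Hrep a' Ha'), (Hrep a Ha); f_equal; lia). subst a'.
        destruct HR as [HR|[_ [HR|[_ HR]]]]; [lia| exfalso; apply (Hirr a Ha HR)|].
        rewrite Hord in HR by auto.
        assert (x' <= M) by (rewrite (Hrep x' Hx'), Px', Nat.add_0_r; apply HM; lia).
        unfold enc. pose proof (to_nat_mono i (tn a x') i (tn a M) (le_n _) (to_nat_mono a x' a M (le_n _) ltac:(lia))). lia.
      * destruct (max_bound (fun j => gA (2 * j + 1)) (fA x / 2)) as [M HM].
        exists (S (tn i (tn a M))).
        intros e' (i' & a' & x' & -> & Hi' & HW') Hc Hr HR.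
        rewrite !fo_enc in Hc. subst i'.
        apply Wit_dom in HW' as [Ha' Hx'].
        unfold rowF, FArel in Hr, HR. rewrite ?fo_enc, ?ga_enc, ?gx_enc in Hr. rewrite ?fo_enc, ?ga_enc, ?gx_enc in HR.
        pose proof (dm2 (fA a')) as Da'. pose proof (dm2 (fA x')) as Dx'.
        revert Hr.
        destruct (Nat.eqb_spec (fA a mod 2) 0) as [|_]; [lia|].
        destruct (Nat.eqb_spec (fA x mod 2) 0) as [|_]; [lia|].
        destruct (Nat.eqb_spec (fA a' mod 2) 0) as [|Pa']; [cbn [Nat.eqb]; lia|].
        destruct (Nat.eqb_spec (fA x' mod 2) 0) as [Px'|Px']; cbn [Nat.eqb]; intro Hr; [lia|].
        assert (Ea : a' = a) by (rewrite (Hrep a' Ha'), (Hrep a Ha); f_equal; lia). subst a'.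
        destruct HR as [HR|[_ [HR|[_ HR]]]]; [lia| exfalso; apply (Hirr a Ha HR)|].
        rewrite Hord in HR by auto.
        assert (x' <= M) by (rewrite (Hrep x' Hx'); replace (fA x' mod 2) with 1 by lia; apply HM; lia).
        unfold enc. pose proof (to_nat_mono i (tn a x') i (tn a M) (le_n _) (to_nat_mono a x' a M (le_n _) ltac:(lia))). lia.
Qed.


Lemma iso_refl A : iso A A.
Proof. exists (fun x => x), (fun x => x). repeat split; auto; tauto. Qed.

Lemma diag_eq_iso B C : (forall phi, diag B phi <-> diag C phi) -> iso B C.
Proof.
  intro H. exists (fun x => x), (fun x => x). split; [|split].
  - intros x Hx. split; auto. destruct (H (true, AEq x x)) as [H1 _].
    unfold diag in H1; simpl in H1. apply H1; auto.
  - intros x Hx. split; auto. destruct (H (true, AEq x x)) as [_ H1].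
    unfold diag in H1; simpl in H1. apply H1; auto.
  - intros x y Hx Hy. destruct (H (true, ALt x y)) as [H1 H2].
    unfold diag in H1, H2; simpl in H1, H2. split; intro; [apply H1| apply H2]; auto.
    + destruct (H (true, AEq x x)) as [H3 _]. unfold diag in H3; simpl in H3.
      destruct (H (true, AEq y y)) as [H4 _]. unfold diag in H4; simpl in H4. tauto.
Qed.

Definition flip2 (x : nat) : nat := (1 - x mod 2) + (x / 2) * 2.

Lemma flip2_props x : flip2 x mod 2 = 1 - x mod 2 /\ flip2 x / 2 = x / 2.
Proof. unfold flip2. pose proof (Nat.mod_upper_bound x 2). split; [apply mod_enc| apply div_enc]; lia. Qed.

Lemma flip2_inv x : flip2 (flip2 x) = x.
Proof.
  pose proof (flip2_props x) as [E1 E2]. unfold flip2 at 1. rewrite E1, E2.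
  pose proof (dm2 x) as [D1 D2]. lia.
Qed.

Lemma rev_ws2 : iso (revS omega_star_times_2) omega_times_2.
Proof.
  exists flip2, flip2. split; [|split].
  - intros x _. split; [exact I| apply flip2_inv].
  - intros y _. split; [exact I| apply flip2_inv].
  - intros x y _ _. simpl. unfold ord_times, ord_rev, ord_omega.
    pose proof (flip2_props x) as [E1 E2]. pose proof (flip2_props y) as [E3 E4].
    rewrite E1, E2, E3, E4. pose proof (dm2 x). pose proof (dm2 y). lia.
Qed.

Definition flipn (n x : nat) : nat := (n - 1 - x mod n) + (x / n) * n.

Lemma flipn_props n x : 1 <= n -> flipn n x mod n = n - 1 - x mod n /\ flipn n x / n = x / n.
Proof. intro hn. unfold flipn. pose proof (Nat.mod_upper_bound x n). split; [apply mod_enc| apply div_enc]; lia. Qed.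

Lemma flipn_inv n x : 1 <= n -> flipn n (flipn n x) = x.
Proof.
  intro hn. pose proof (flipn_props n x hn) as [E1 E2]. unfold flipn at 1. rewrite E1, E2.
  pose proof (Nat.div_mod_eq x n). pose proof (Nat.mod_upper_bound x n). lia.
Qed.

Lemma rev_w2n n : 1 <= n -> iso (revS (omega2_times n)) (omega2_star_times n).
Proof.
  intro hn. exists (flipn n), (flipn n). split; [|split].
  - intros x _. split; [exact I| apply flipn_inv; auto].
  - intros y _. split; [exact I| apply flipn_inv; auto].
  - intros x y _ _. simpl. unfold ord_times, ord_rev.
    pose proof (flipn_props n x hn) as [E1 E2]. pose proof (flipn_props n y hn) as [E3 E4].
    rewrite E1, E2, E3, E4. pose proof (Nat.mod_upper_bound x n). pose proof (Nat.mod_upper_bound y n).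
    split; (intros [Hq|[Hq Hq2]]; [left; lia| right; split; [lia| auto]]).
Qed.

Lemma Wit_rev A a x : Wit (revS A) a x <-> Wit A a x.
Proof.
  unfold Wit; simpl. split; intros (p & q & H); exists q, p; intuition.
Qed.

Lemma FA_rev n (hn : 1 <= n) A : iso (FA n A) (revS (FA n (revS A))).
Proof.
  set (phi := fun e => enc (n - 1 - fo e) (ga e) (gx e)).
  assert (Hphi : forall i a x, i < n -> phi (enc i a x) = enc (n - 1 - i) a x).
  { intros. unfold phi. rewrite fo_enc, ga_enc, gx_enc. reflexivity. }
  exists phi, phi. split; [|split].
  - intros e (i & a & x & -> & Hi & HW). rewrite Hphi by auto. split.
    + exists (n - 1 - i), a, x. repeat split; [lia| apply Wit_rev; auto].
    + rewrite Hphi by lia. f_equal. lia.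
  - intros e (i & a & x & -> & Hi & HW). rewrite Hphi by auto. split.
    + exists (n - 1 - i), a, x. repeat split; [lia| apply Wit_rev in HW; auto].
    + rewrite Hphi by lia. f_equal. lia.
  - intros e e' (i & a & x & -> & Hi & HW) (i' & a' & x' & -> & Hi' & HW').
    rewrite !Hphi by auto. simpl. unfold FArel. simpl. rewrite !fo_enc, !ga_enc, !gx_enc.
    split; intros [H|[H1 [H2|[H3 H4]]]]; [left; lia | right; split; [lia| left; auto] | right; split; [lia| right; split; auto] | left; lia | right; split; [lia| left; auto] | right; split; [lia| right; split; auto]].
Qed.

Lemma class_ws2 n (hn : 1 <= n) A : iso A omega_star_times_2 -> iso (FA n A) (omega2_star_times n).
Proof.
  intro HI.
  assert (H1 : iso (revS A) omega_times_2) by (eapply iso_trans; [apply iso_rev; exact HI| apply rev_ws2]).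
  apply (class_w2 n hn) in H1.
  eapply iso_trans; [apply FA_rev; auto|].
  eapply iso_trans; [apply iso_rev; exact H1|].
  apply rev_w2n; auto.
Qed.

Definition has_least (A : structure) : Prop :=
  exists m, sdom A m /\ forall y, sdom A y -> y <> m -> srel A m y.

Lemma has_least_iso A B : iso A B -> has_least A -> has_least B.
Proof.
  intros (f & g & H1 & H2 & H3) (m & Hm & Hl). exists (f m).
  destruct (H1 m Hm) as [Hfm Egm]. split; auto.
  intros y Hy Hne. destruct (H2 y Hy) as [Hgy Efy].
  rewrite <- Efy. apply H3; auto. apply Hl; auto. intro E. apply Hne. rewrite <- Efy, E. reflexivity.
Qed.

Lemma least_w2 : has_least omega_times_2.
Proof.
  exists 0. split; [exact I|]. intros y _ Hy. cbn [srel omega_times_2]. unfold ord_times, ord_omega.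
  rewrite Nat.mod_0_l, Nat.div_0_l by lia.
  pose proof (dm2 y). destruct (Nat.eq_dec (y mod 2) 0); [right| left]; lia.
Qed.

Lemma noleast_ws2 : ~ has_least omega_star_times_2.
Proof.
  intros (m & _ & Hl). specialize (Hl (m + 2) I ltac:(lia)). cbn [srel omega_star_times_2] in Hl.
  unfold ord_times, ord_rev, ord_omega in Hl.
  replace (m + 2) with (m mod 2 + (m / 2 + 1) * 2) in Hl by (pose proof (dm2 m); lia).
  rewrite mod_enc, div_enc in Hl by (apply Nat.mod_upper_bound; lia). lia.
Qed.

Lemma least_w2n n : 1 <= n -> has_least (omega2_times n).
Proof.
  intro hn. exists 0. split; [exact I|]. intros y _ Hy. cbn [srel omega2_times]. unfold ord_times, ord_omega2.
  rewrite Nat.mod_0_l, Nat.div_0_l by lia. cbn [of_nat nat_rec fst snd].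
  destruct (Nat.eq_dec (y mod n) 0) as [E|E]; [right| left; lia].
  split; auto.
  assert (Hq : y / n <> 0) by (intro Hq; apply Hy; rewrite (Nat.div_mod_eq y n), E, Hq; lia).
  destruct (of_nat (y / n)) as [a b] eqn:Eq. simpl.
  destruct a; [|lia]. destruct b; [|lia]. exfalso. apply Hq.
  apply (f_equal to_nat) in Eq. rewrite cancel_to_of in Eq. rewrite Eq. reflexivity.
Qed.

Lemma noleast_ws2n n : 1 <= n -> ~ has_least (omega2_star_times n).
Proof.
  intros hn (m & _ & Hl).
  set (y := m mod n + tn (S (fo (m / n))) 0 * n).
  assert (Hmn : m mod n < n) by (apply Nat.mod_upper_bound; lia).
  assert (Ey1 : y mod n = m mod n) by (apply mod_enc; auto).
  assert (Ey2 : y / n = tn (S (fo (m / n))) 0) by (apply div_enc; auto).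
  assert (Hne : y <> m).
  { intro E. assert (E2 : fo (y / n) = fo (m / n)) by (rewrite E; reflexivity).
    rewrite Ey2, fo_tn in E2. lia. }
  specialize (Hl y I Hne). cbn [srel omega2_star_times] in Hl. unfold ord_times, ord_rev, ord_omega2 in Hl.
  rewrite Ey1, Ey2 in Hl. fold (fo (m / n)) (so (m / n)) (fo (tn (S (fo (m / n))) 0)) in Hl.
  rewrite fo_tn in Hl. lia.
Qed.

Lemma not_iso_w n : 1 <= n -> ~ iso omega_times_2 omega_star_times_2.
Proof. intros _ H. apply noleast_ws2. eapply has_least_iso; [exact H| apply least_w2]. Qed.

Lemma not_iso_w2n n : 1 <= n -> ~ iso (omega2_times n) (omega2_star_times n).
Proof. intros hn H. apply (noleast_ws2n n hn). eapply has_least_iso; [exact H| apply least_w2n; auto]. Qed.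

Theorem corollary3p4 (n : nat) (hn : 1 <= n) :
  comp_embeddable (class2 omega_times_2 omega_star_times_2)
                  (class2 (omega2_times n) (omega2_star_times n)).
Proof.
  exists (Gam n). split; [apply ce_Gam|]. split.
  - intros A HA. exists (FA n A). split.
    + destruct HA as [HA|HA]; [left; apply class_w2| right; apply class_ws2]; auto.
    + apply diag_FA. destruct HA as [HA|HA]; eapply LO_iso; eauto; [apply LO_w2| apply LO_ws2].
  - intros A A' B B' HA HA' HB HB'.
    assert (LA : LO A) by (destruct HA as [HA|HA]; eapply LO_iso; eauto; [apply LO_w2| apply LO_ws2]).
    assert (LA' : LO A') by (destruct HA' as [HA'|HA']; eapply LO_iso; eauto; [apply LO_w2| apply LO_ws2]).
    assert (IB : iso B (FA n A)) by (apply diag_eq_iso; intro phi; rewrite HB, diag_FA; auto; reflexivity).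
    assert (IB' : iso B' (FA n A')) by (apply diag_eq_iso; intro phi; rewrite HB', diag_FA; auto; reflexivity).
    destruct HA as [HA|HA], HA' as [HA'|HA'].
    + split; intros _.
      * eapply iso_trans; [exact IB|]. eapply iso_trans; [apply class_w2; eauto|].
        apply iso_sym. eapply iso_trans; [exact IB'|]. apply class_w2; eauto.
      * eapply iso_trans; [exact HA|]. apply iso_sym; auto.
    + split; intro H; exfalso.
      * apply (not_iso_w n hn). eapply iso_trans; [apply iso_sym; exact HA|]. eapply iso_trans; eauto.
      * apply (not_iso_w2n n hn). eapply iso_trans; [apply iso_sym; apply class_w2; eauto|].
        eapply iso_trans; [apply iso_sym; exact IB|]. eapply iso_trans; [exact H|].
        eapply iso_trans; [exact IB'|]. apply class_ws2; auto.
    + split; intro H; exfalso.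
      * apply (not_iso_w n hn). eapply iso_trans; [apply iso_sym; exact HA'|].
        eapply iso_trans; [apply iso_sym; exact H|]. exact HA.
      * apply (not_iso_w2n n hn). eapply iso_trans; [apply iso_sym; apply class_w2; eauto|].
        eapply iso_trans; [apply iso_sym; exact IB'|]. eapply iso_trans; [apply iso_sym; exact H|].
        eapply iso_trans; [exact IB|]. apply class_ws2; auto.
    + split; intros _.
      * eapply iso_trans; [exact IB|]. eapply iso_trans; [apply class_ws2; eauto|].
        apply iso_sym. eapply iso_trans; [exact IB'|]. apply class_ws2; eauto.
      * eapply iso_trans; [exact HA|]. apply iso_sym; auto.
Qed.
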